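(* Let $n\geq 2$ and let $\theta$ be a domestic duality of the building $\mathsf{A}_n(2)$ (the projective space $\mathsf{PG}(n,2)$). Then either $\theta$ is an exceptional domestic duality, or $n$ is odd and $\theta$ is a symplectic polarity.
   Context: Vertices of type $i$ of $\mathsf{PG}(n,2)$ are the $(i-1)$-dimensional projective subspaces. A duality is an automorphism with type map $i\mapsto n+1-i$. Simplices are opposite if every chamber containing either is opposite some chamber containing the other. $\theta$ is domestic if no chamber is mapped to an opposite chamber; it is exceptional domestic if it is domestic and for every type $i$ there is a simplex whose type contains $i$ mapped to an opposite simplex. A symplectic polarity is a duality $U\mapsto U^\perp$ for a nondegenerate alternating form on $\mathbb{F}_2^{n+1}$. *)

(* Defs.v *)
(* PG(n,2) modelled by the F_2-vector space F_2^(n+1) = 'rV['F_2]_(n.+1);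
   vertices of type i = vector subspaces of dimension i (projective dimension i-1), 1 <= i <= n. *)
From HB Require Import structures.
From mathcomp Require Import all_boot all_order all_algebra all_fingroup all_field.
Set Implicit Arguments. Unset Strict Implicit. Unset Printing Implicit Defensive.
Import GRing.Theory.
Local Open Scope ring_scope.

Definition vT (n : nat) := 'rV['F_2]_(n.+1).

Definition vertex (n : nat) (U : {vspace vT n}) : Prop := (0 < \dim U < n.+1)%N.

Definition incident (n : nat) (U W : {vspace vT n}) : Prop :=
  (U <= W)%VS \/ (W <= U)%VS.

Definition simplex (n : nat) (F : {vspace vT n} -> Prop) : Prop :=
  (forall U, F U -> vertex U) /\ (forall U W, F U -> F W -> incident U W).

Definition has_type (n : nat) (F : {vspace vT n} -> Prop) (i : nat) : Prop :=
  exists U, F U /\ \dim U = i.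

Definition chamber (n : nat) (C : {vspace vT n} -> Prop) : Prop :=
  simplex C /\ forall i, (0 < i <= n)%N -> has_type C i.

Definition face (n : nat) (F G : {vspace vT n} -> Prop) : Prop :=
  forall U, F U -> G U.

Definition chamber_opp (n : nat) (C D : {vspace vT n} -> Prop) : Prop :=
  chamber C /\ chamber D /\
  forall U W, C U -> D W -> (\dim U + \dim W = n.+1)%N -> (U :&: W = 0)%VS.

Definition simplex_opp (n : nat) (F G : {vspace vT n} -> Prop) : Prop :=
  simplex F /\ simplex G /\
  (forall C, chamber C -> face F C -> exists D, chamber D /\ face G D /\ chamber_opp C D) /\
  (forall D, chamber D -> face G D -> exists C, chamber C /\ face F C /\ chamber_opp C D).

Definition img (n : nat) (theta : {vspace vT n} -> {vspace vT n})
  (F : {vspace vT n} -> Prop) : {vspace vT n} -> Prop :=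
  fun W => exists U, F U /\ W = theta U.

Definition duality (n : nat) (theta : {vspace vT n} -> {vspace vT n}) : Prop :=
  (forall U, vertex U -> vertex (theta U) /\ \dim (theta U) = (n.+1 - \dim U)%N) /\
  (forall U W, vertex U -> vertex W -> theta U = theta W -> U = W) /\
  (forall W, vertex W -> exists U, vertex U /\ theta U = W) /\
  (forall U W, vertex U -> vertex W -> (incident U W <-> incident (theta U) (theta W))).

Definition domestic (n : nat) (theta : {vspace vT n} -> {vspace vT n}) : Prop :=
  forall C, chamber C -> ~ chamber_opp C (img theta C).

Definition exceptional_domestic (n : nat) (theta : {vspace vT n} -> {vspace vT n}) : Prop :=
  domestic theta /\
  forall i, (0 < i <= n)%N ->
    exists F, simplex F /\ has_type F i /\ simplex_opp F (img theta F).

Definition bform (n : nat) (M : 'M['F_2]_(n.+1)) (x y : vT n) : 'F_2 :=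
  (x *m M *m y^T) 0 0.

Definition symplectic_polarity (n : nat) (theta : {vspace vT n} -> {vspace vT n}) : Prop :=
  exists M : 'M['F_2]_(n.+1),
    (forall x : vT n, bform M x x = 0) /\
    (forall x : vT n, (forall y : vT n, bform M x y = 0) -> x = 0) /\
    (forall U, vertex U -> forall y : vT n,
        y \in theta U <-> (forall x : vT n, x \in U -> bform M x y = 0)).

(* Main.v *)
Require Import Defs.
From mathcomp Require Import all_boot all_order all_algebra all_fingroup all_field.
From Stdlib Require Import Classical ClassicalEpsilon FunctionalExtensionality PropExtensionality.
From mathcomp Require Import zify ring.
Set Implicit Arguments. Unset Strict Implicit. Unset Printing Implicit Defensive.
Import GRing.Theory.
Local Open Scope ring_scope.

Lemma F2cases (c : 'F_2) : c = 0 \/ c = 1.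
Proof. case: c => [[|[|k]] Hk]; [left|right|]; try by apply/val_inj. by []. Qed.
Lemma F2_11 : (1 + 1 : 'F_2) = 0.
Proof. by apply/val_inj. Qed.
Lemma F2add (c : 'F_2) : c + c = 0.
Proof. case: (F2cases c) => ->; [by rewrite addr0 | exact: F2_11]. Qed.
Lemma F2opp (c : 'F_2) : - c = c.
Proof. by apply/eqP; rewrite eq_sym -subr_eq0 opprK F2add. Qed.
Lemma vadd2 n (x : vT n) : x + x = 0.
Proof. by rewrite -{1 2}(scale1r x) -scalerDl F2_11 scale0r. Qed.
Lemma vsubE n (x y : vT n) : x - y = x + y.
Proof. by apply/eqP; rewrite subr_eq -addrA vadd2 addr0. Qed.

Lemma dimvT n : \dim (fullv : {vspace vT n}) = n.+1.
Proof. by rewrite dimvf /dim /= mul1n. Qed.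

Lemma dimv_le n (U : {vspace vT n}) : (\dim U <= n.+1)%N.
Proof. have := dimvS (subvf U); by rewrite dimvT. Qed.

Lemma dim_strict n (U V : {vspace vT n}) v :
  (U <= V)%VS -> v \in V -> v \notin U -> (\dim U < \dim V)%N.
Proof.
move=> UV vV vU; have := dimv_leqif_sup UV; rewrite ltn_neqAle => -[-> ->].
rewrite andbT; apply/negP => VU; by rewrite (subvP VU) in vU.
Qed.

Lemma subv_dim_eq n (U V : {vspace vT n}) :
  (U <= V)%VS -> (\dim V <= \dim U)%N -> U = V.
Proof. by move=> UV le; apply/eqP; rewrite eqEdim UV le. Qed.

Lemma full_dim n (U : {vspace vT n}) : (n.+1 <= \dim U)%N -> U = fullv.
Proof. by move=> h; apply: subv_dim_eq; rewrite ?subvf // dimvT. Qed.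

Lemma inc_le n (X Y : {vspace vT n}) :
  incident X Y -> (\dim X <= \dim Y)%N -> (X <= Y)%VS.
Proof.
case=> // YX le; have -> : X = Y by apply/esym/subv_dim_eq.
exact: subvv.
Qed.

Lemma point_vertex n (x : vT n) : (0 < n)%N -> x != 0 -> vertex <[x]>%VS.
Proof. by move=> n0 x0; rewrite /vertex dim_vline x0. Qed.

Lemma hyper_full n (H : {vspace vT n}) y :
  \dim H = n -> y \notin H -> (H + <[y]>)%VS = fullv.
Proof.
move=> dH yH; apply: full_dim.
have := @dim_strict _ H (H + <[y]>)%VS y (addvSl _ _).
rewrite dH; apply => //.
exact: (subvP (addvSr H <[y]>%VS) y (memv_line y)).
Qed.

Lemma hyper_add n (H : {vspace vT n}) y z :
  \dim H = n -> y \notin H -> z \notin H -> y + z \in H.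
Proof.
move=> dH yH; have := memvf z; rewrite -(hyper_full dH yH).
case/memv_addP=> h hH [w /vlineP[c ->] ->].
case: (F2cases c) => ->; first by rewrite scale0r addr0 hH.
move=> _.
by rewrite scale1r addrCA vadd2 addr0.
Qed.

Lemma mem_addl n (H : {vspace vT n}) y z : y \in H -> (y + z \in H) = (z \in H).
Proof.
move=> yH; apply/idP/idP => h; last by rewrite memvD.
by rewrite -[z]add0r -(vadd2 y) -addrA memvD.
Qed.

Definition hind n (H : {vspace vT n}) (y : vT n) : 'F_2 := if y \in H then 0 else 1.

Lemma hind_add n (H : {vspace vT n}) y z : \dim H = n ->
  hind H (y + z) = hind H y + hind H z.
Proof.
move=> dH; rewrite /hind.
case yH: (y \in H); case zH: (z \in H).
- by rewrite memvD // addr0.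
- by rewrite mem_addl // zH add0r.
- by rewrite addrC mem_addl // yH addr0.
- by rewrite hyper_add ?yH ?zH // F2_11.
Qed.

Lemma hind_scale n (H : {vspace vT n}) c y : \dim H = n ->
  hind H (c *: y) = c * hind H y.
Proof.
move=> dH; case: (F2cases c) => ->; last by rewrite scale1r mul1r.
by rewrite scale0r mul0r /hind mem0v.
Qed.

Lemma dual_vertex n theta (U : {vspace vT n}) : duality theta -> vertex U -> vertex (theta U).
Proof. by case=> h _ /h []. Qed.

Lemma dual_dim n theta (U : {vspace vT n}) : duality theta -> vertex U ->
  \dim (theta U) = (n.+1 - \dim U)%N.
Proof. by case=> h _ /h []. Qed.

Lemma dual_le n theta (A B : {vspace vT n}) : duality theta -> vertex A -> vertex B ->
  (A <= B)%VS -> (theta B <= theta A)%VS.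
Proof.
move=> Hd vA vB AB; have [_ [_ [_ hi]]] := Hd.
have h := (hi A B vA vB).1 (or_introl AB).
apply: inc_le; first by case: h; [right|left].
rewrite !(dual_dim Hd) //; apply: leq_sub2l; exact: dimvS.
Qed.

Lemma dual_le_rev n theta (A B : {vspace vT n}) : duality theta -> vertex A -> vertex B ->
  (theta A <= theta B)%VS -> (B <= A)%VS.
Proof.
move=> Hd vA vB AB; have [_ [_ [_ hi]]] := Hd.
have h := (hi A B vA vB).2 (or_introl AB).
apply: inc_le; first by case: h; [right|left].
have := dimvS AB; rewrite !(dual_dim Hd) //.
move: vA vB; rewrite /vertex => /andP[_ a] /andP[_ b].
move=> h2; lia.
Qed.

Lemma dual_inj n theta (A B : {vspace vT n}) : duality theta -> vertex A -> vertex B ->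
  theta A = theta B -> A = B.
Proof. by case=> _ [h _]; apply: h. Qed.

Lemma exists_notin n (U V : {vspace vT n}) : ~~ (U <= V)%VS -> exists u, u \in U /\ u \notin V.
Proof.
move=> /negP h; apply: NNPP => hn; apply: h; apply/subvP => u uU.
apply: NNPP => uV; apply: hn; exists u; split => //; exact/negP.
Qed.

Lemma dim_lt_notin n (U V : {vspace vT n}) : (\dim V < \dim U)%N -> exists u, u \in U /\ u \notin V.
Proof.
move=> lt; apply: exists_notin; apply/negP => UV.
by have := dimvS UV; rewrite leqNgt lt.
Qed.

Lemma line_eq n (x y : vT n) : x != 0 -> y != 0 -> x \in <[y]>%VS -> x = y.
Proof.
move=> x0 y0 /vlineP[c xE]; move: x0; rewrite xE.
by case: (F2cases c) => ->; rewrite ?scale0r ?eqxx // scale1r.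
Qed.

Lemma hyper_cap n (Ha Hb K : {vspace vT n}) :
  \dim Ha = n -> \dim Hb = n -> Ha != Hb -> (K <= Ha :&: Hb)%VS -> \dim K = n.-1 ->
  (Ha :&: Hb)%VS = K.
Proof.
move=> da db ab KH dK; apply/esym/subv_dim_eq => //.
have HbHa : ~~ (Hb <= Ha)%VS.
  apply/negP => h; move/negP: ab; apply; apply/eqP/esym/subv_dim_eq => //.
  by rewrite da db.
have [u [uHb uHa]] := exists_notin HbHa.
have full : (Ha + Hb)%VS = fullv.
  apply: full_dim; have := @dim_strict _ Ha (Ha + Hb)%VS u (addvSl _ _).
  by rewrite da; apply => //; exact: (subvP (addvSr Ha Hb) u uHb).
have := dimv_sum_cap Ha Hb; rewrite full dimvT da db dK.
move=> h; lia.
Qed.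

Lemma triple_hind n (H1 H2 H3 K : {vspace vT n}) :
  \dim H1 = n -> \dim H2 = n -> \dim H3 = n -> (\dim K < n)%N ->
  (H1 :&: H2)%VS = K -> (H1 :&: H3)%VS = K -> (H2 :&: H3)%VS = K ->
  forall y, hind H3 y = hind H1 y + hind H2 y.
Proof.
move=> d1 d2 d3 dK e12 e13 e23 y.
have KH : forall (A B : {vspace vT n}) z, (A :&: B)%VS = K -> z \in A -> z \in B -> z \in K.
  by move=> A B z <- zA zB; rewrite memv_cap zA zB.
have KH1 : forall z, z \in K -> z \in H1 by move=> z; rewrite -e12 memv_cap => /andP[].
have KH2 : forall z, z \in K -> z \in H2 by move=> z; rewrite -e12 memv_cap => /andP[].
have KH3 : forall z, z \in K -> z \in H3 by move=> z; rewrite -e13 memv_cap => /andP[].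
rewrite /hind.
case y1: (y \in H1); case y2: (y \in H2).
- by rewrite KH3 ?addr0 // (KH _ _ _ e12).
- case y3: (y \in H3); last by rewrite add0r.
  by rewrite KH2 in y2 => //; apply: (KH _ _ _ e13).
- case y3: (y \in H3); last by rewrite addr0.
  by rewrite KH1 in y1 => //; apply: (KH _ _ _ e23).
- case y3: (y \in H3); last first.
    exfalso.
    have [w [wH1 wK]] : exists w, w \in H1 /\ w \notin K by apply: dim_lt_notin; rewrite d1.
    have wH2 : w \notin H2 by apply/negP => h; rewrite (KH _ _ _ e12) in wK.
    have wH3 : w \notin H3 by apply/negP => h; rewrite (KH _ _ _ e13) in wK.
    have s2 : y + w \in H2 by apply: hyper_add => //; rewrite y2.
    have s3 : y + w \in H3 by apply: hyper_add => //; rewrite y3.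
    have := KH1 _ (KH _ _ _ e23 s2 s3).
    by rewrite addrC mem_addl // y1.
  by rewrite F2_11.
Qed.

Definition fB n (theta : {vspace vT n} -> {vspace vT n}) (x y : vT n) : 'F_2 :=
  if x == 0 then 0 else hind (theta <[x]>%VS) y.

Lemma hyp_dim n theta (x : vT n) : (0 < n)%N -> duality theta -> x != 0 ->
  \dim (theta <[x]>%VS) = n.
Proof.
move=> n0 Hd x0; rewrite (dual_dim Hd); last exact: point_vertex.
by rewrite dim_vline x0 subn1.
Qed.

Lemma fB_addr n theta (x y z : vT n) : (0 < n)%N -> duality theta ->
  fB theta x (y + z) = fB theta x y + fB theta x z.
Proof.
move=> n0 Hd; rewrite /fB; case: ifP => x0; first by rewrite addr0.
by rewrite hind_add // hyp_dim // x0.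
Qed.

Lemma fB_scaler n theta (x y : vT n) c : (0 < n)%N -> duality theta ->
  fB theta x (c *: y) = c * fB theta x y.
Proof.
move=> n0 Hd; rewrite /fB; case: ifP => x0; first by rewrite mulr0.
by rewrite hind_scale // hyp_dim // x0.
Qed.

Lemma fB0l n theta (y : vT n) : fB theta 0 y = 0.
Proof. by rewrite /fB eqxx. Qed.

Lemma fB0r n theta (x : vT n) : fB theta x 0 = 0.
Proof. by rewrite /fB /hind mem0v; case: ifP. Qed.

Lemma fB_memE n theta (x y : vT n) : x != 0 -> (fB theta x y == 0) = (y \in theta <[x]>%VS).
Proof. by move=> x0; rewrite /fB (negbTE x0) /hind; case: ifP. Qed.

Lemma line_dim2 n (x1 x2 : vT n) : x1 != 0 -> x2 != 0 -> x1 != x2 ->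
  \dim (<[x1]> + <[x2]>)%VS = 2.
Proof.
move=> h1 h2 h12; apply/eqP; rewrite eqn_leq; apply/andP; split.
  by have := dimv_sum_cap <[x1]>%VS <[x2]>%VS; rewrite !dim_vline h1 h2 /= => h; lia.
have := @dim_strict _ <[x1]>%VS (<[x1]> + <[x2]>)%VS x2 (addvSl _ _).
rewrite dim_vline h1; apply; first exact: (subvP (addvSr _ _) x2 (memv_line x2)).
by apply/negP => /(line_eq h2 h1) e; rewrite e eqxx in h12.
Qed.

Lemma fB_addl n theta (x1 x2 y : vT n) : (1 < n)%N -> duality theta ->
  fB theta (x1 + x2) y = fB theta x1 y + fB theta x2 y.
Proof.
move=> n1 Hd; have n0 : (0 < n)%N by apply: ltnW.
have [->|h1] := eqVneq x1 0; first by rewrite add0r fB0l add0r.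
have [->|h2] := eqVneq x2 0; first by rewrite addr0 fB0l addr0.
have [e|h12] := eqVneq x1 x2; first by rewrite e vadd2 fB0l F2add.
have h3 : x1 + x2 != 0.
  by apply: contra h12 => /eqP e; apply/eqP; apply: (@addIr _ x2); rewrite e vadd2.
have h13 : x1 != x1 + x2.
  by apply: contra h2 => /eqP e; apply/eqP; apply: (@addrI _ x1); rewrite -e addr0.
have h23 : x2 != x1 + x2.
  by apply: contra h1 => /eqP e; apply/eqP; apply: (@addIr _ x2); rewrite -e add0r.
set L := (<[x1]> + <[x2]>)%VS.
have dL : \dim L = 2 by apply: line_dim2.
have vL : vertex L by rewrite /vertex dL.
have Lx : forall x, x != 0 -> x \in L -> (theta L <= theta <[x]>)%VS.
  move=> x x0 xL; apply: (dual_le Hd) => //; first exact: point_vertex.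
have x1L : x1 \in L by exact: (subvP (addvSl _ _) x1 (memv_line x1)).
have x2L : x2 \in L by exact: (subvP (addvSr _ _) x2 (memv_line x2)).
have x3L : x1 + x2 \in L by rewrite memvD.
have dTL : \dim (theta L) = n.-1 by rewrite (dual_dim Hd) // dL; lia.
have neq : forall a b : vT n, a != 0 -> b != 0 -> a != b -> theta <[a]>%VS != theta <[b]>%VS.
  move=> a b a0 b0 ab; apply/negP => /eqP e.
  have := dual_inj Hd (point_vertex n0 a0) (point_vertex n0 b0) e.
  move=> e2; have : a \in <[b]>%VS by rewrite -e2 memv_line.
  by move/(line_eq a0 b0) => e3; rewrite e3 eqxx in ab.
have cap : forall a b : vT n, a != 0 -> b != 0 -> a != b -> a \in L -> b \in L ->
    (theta <[a]> :&: theta <[b]>)%VS = theta L.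
  move=> a b a0 b0 ab aL bL; apply: hyper_cap; rewrite ?hyp_dim //; first exact: neq.
  by rewrite subv_cap !Lx.
rewrite /fB (negbTE h1) (negbTE h2) (negbTE h3).
apply: (triple_hind (K := theta L)); rewrite ?hyp_dim ?dTL //; first by lia.
- exact: cap.
- exact: cap.
- exact: cap.
Qed.

Definition MB n (theta : {vspace vT n} -> {vspace vT n}) : 'M['F_2]_(n.+1) :=
  \matrix_(i, j) fB theta 'e_i 'e_j.

Lemma bform_MB n theta (x y : vT n) : (1 < n)%N -> duality theta ->
  bform (MB theta) x y = fB theta x y.
Proof.
move=> n1 Hd; have n0 : (0 < n)%N by apply: ltnW.
have sl : forall (I : finType) (F : I -> vT n) z,
    fB theta (\sum_i F i) z = \sum_i fB theta (F i) z.
  move=> I F z; apply: (big_morph (fun u => fB theta u z)).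
  - by move=> a b; apply: fB_addl.
  - exact: fB0l.
have sr : forall (I : finType) (F : I -> vT n) z,
    fB theta z (\sum_i F i) = \sum_i fB theta z (F i).
  move=> I F z; apply: (big_morph (fun u => fB theta z u)).
  - by move=> a b; apply: fB_addr.
  - exact: fB0r.
have scl : forall c (u w : vT n), fB theta (c *: u) w = c * fB theta u w.
  move=> c u w; case: (F2cases c) => ->; first by rewrite scale0r fB0l mul0r.
  by rewrite scale1r mul1r.
rewrite {2}(row_sum_delta x) sl.
under eq_bigr => i _ do rewrite scl {1}(row_sum_delta y) sr.
rewrite /bform !mxE.
have -> : \sum_j (x *m MB theta) 0 j * y^T j 0 =
    \sum_j \sum_i x 0 i * MB theta i j * y 0 j.
  apply: eq_bigr => j _; rewrite !mxE big_distrl /=; apply: eq_bigr => i _.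
  by rewrite !mxE.
rewrite exchange_big /=; apply: eq_bigr => i _.
rewrite big_distrr /=; apply: eq_bigr => j _.
by rewrite !mxE fB_scaler // [y 0 j * _]mulrC mulrA.
Qed.

Definition perpP n (M : 'M['F_2]_(n.+1)) (U : {vspace vT n}) (y : vT n) : Prop :=
  forall x, x \in U -> bform M x y = 0.

Lemma dual_surj n theta (W : {vspace vT n}) : duality theta -> vertex W ->
  exists U, vertex U /\ theta U = W.
Proof. by case=> _ [_ [h _]]; apply: h. Qed.

Lemma theta_perp1 n theta (U : {vspace vT n}) y : (1 < n)%N -> duality theta -> vertex U ->
  y \in theta U -> perpP (MB theta) U y.
Proof.
move=> n1 Hd vU yU x xU; have n0 : (0 < n)%N by apply: ltnW.
rewrite bform_MB //; have [->|x0] := eqVneq x 0; first exact: fB0l.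
apply/eqP; rewrite fB_memE //; apply: (subvP (dual_le Hd _ vU _)) => //.
  exact: point_vertex.
Qed.

Lemma theta_perp n theta (U : {vspace vT n}) y : (1 < n)%N -> duality theta -> vertex U ->
  y \in theta U <-> perpP (MB theta) U y.
Proof.
move=> n1 Hd vU; have n0 : (0 < n)%N by apply: ltnW.
split; first exact: theta_perp1.
move=> py; apply: NNPP => yU; move/negP: yU => yU.
have dU := dual_dim Hd vU.
move: (vU); rewrite /vertex => /andP[k0 km].
have [k1|k2] := eqVneq (\dim U) 1%N.
  have [x [xU x0]] : exists x, x \in U /\ x \notin (0 : {vspace vT n})%VS.
    by apply: dim_lt_notin; rewrite dimv0 k1.
  rewrite memv0 in x0.
  have Ux : U = <[x]>%VS.
    by apply/esym/subv_dim_eq; rewrite -?memvE // dim_vline x0 k1.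
  move: yU; rewrite Ux -fB_memE // -(bform_MB _ _ n1 Hd).
  by rewrite (py x xU) eqxx.
set Y := (theta U + <[y]>)%VS.
have dY : \dim Y = (\dim (theta U)).+1.
  apply/eqP; rewrite eqn_leq; apply/andP; split.
    have := dimv_sum_cap (theta U) <[y]>%VS; rewrite dim_vline.
    move=> h; have hb : (nat_of_bool (y != 0%R) <= 1)%N by case: (y != 0%R).
    rewrite /Y; lia.
  apply: (@dim_strict _ _ _ y); first exact: addvSl.
    exact: (subvP (addvSr _ _) y (memv_line y)).
  exact: yU.
have vY : vertex Y by rewrite /vertex dY dU; apply/andP; split; lia.
have [X [vX XY]] := dual_surj Hd vY.
have XU : (X <= U)%VS.
  apply: (dual_le_rev Hd vU vX); rewrite XY; exact: addvSl.
have dX : \dim X = (\dim U).-1.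
  have := dual_dim Hd vX; rewrite XY dY dU => h.
  move: vX; rewrite /vertex => /andP[a b]; lia.
have [u [uU uX]] : exists u, u \in U /\ u \notin X.
  by apply: dim_lt_notin; rewrite dX; lia.
have u0 : u != 0 by apply: contra uX => /eqP ->; rewrite mem0v.
have : (theta X <= theta <[u]>%VS)%VS.
  rewrite XY; apply/subvP => z /memv_addP[a aT [w /vlineP[c ->] ->]].
  apply: memvD.
    apply: (subvP (dual_le Hd (point_vertex n0 u0) vU _)) => //; by rewrite -memvE.
  apply: memvZ; rewrite -fB_memE // -(bform_MB _ _ n1 Hd); apply/eqP; exact: py.
move/(dual_le_rev Hd vX (point_vertex n0 u0)); rewrite -memvE => uX'.
by rewrite uX' in uX.
Qed.

Lemma bform_e n (M : 'M['F_2]_(n.+1)) i j : bform M 'e_i 'e_j = M i j.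
Proof. by rewrite /bform trmx_delta -rowE -colE !mxE. Qed.

Lemma bformDl n (M : 'M['F_2]_(n.+1)) (x y z : vT n) :
  bform M (x + y) z = bform M x z + bform M y z.
Proof. by rewrite /bform !mulmxDl mxE. Qed.

Lemma bformDr n (M : 'M['F_2]_(n.+1)) (x y z : vT n) :
  bform M x (y + z) = bform M x y + bform M x z.
Proof. by rewrite /bform linearD /= mulmxDr mxE. Qed.

Lemma bformZl n (M : 'M['F_2]_(n.+1)) c (x z : vT n) :
  bform M (c *: x) z = c * bform M x z.
Proof. by rewrite /bform -!scalemxAl mxE. Qed.

Lemma bformZr n (M : 'M['F_2]_(n.+1)) c (x z : vT n) :
  bform M x (c *: z) = c * bform M x z.
Proof. by rewrite /bform linearZ /= -scalemxAr mxE. Qed.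

Lemma bform0l n (M : 'M['F_2]_(n.+1)) (z : vT n) : bform M 0 z = 0.
Proof. by rewrite -(scale0r (0 : vT n)) bformZl mul0r. Qed.

Lemma alt_sym n (M : 'M['F_2]_(n.+1)) : (forall x, bform M x x = 0) ->
  (forall i, M i i = 0) /\ (forall i j, M i j = M j i).
Proof.
move=> h; split=> [i|i j]; first by rewrite -bform_e h.
have := h ('e_i + 'e_j).
rewrite bformDl !bformDr !bform_e.
have := h 'e_i; have := h 'e_j; rewrite !bform_e => -> ->.
rewrite add0r addr0 => /eqP; rewrite addr_eq0 F2opp => /eqP ->.
by [].
Qed.

Lemma F2_natr (c : 'F_2) : ((c : nat)%:Z)%:~R = c.
Proof. by rewrite /intmul /= natr_Zp. Qed.

Lemma alt_odd n (M : 'M['F_2]_(n.+1)) : (forall x, bform M x x = 0) ->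
  (forall x : vT n, (forall y, bform M x y = 0) -> x = 0) -> odd n.
Proof.
move=> alt nd; apply: NNPP => /negP ev.
have [dg sy] := alt_sym alt.
pose N : 'M[int]_(n.+1) := \matrix_(i, j)
  if (i < j)%N then ((M i j : nat)%:Z) else if (j < i)%N then - ((M j i : nat)%:Z) else 0.
have NT : N^T = - N.
  apply/matrixP => i j; rewrite !mxE.
  case: (ltngtP i j) => h //=; rewrite ?opprK //.

have dN : \det N = 0.
  have := det_tr N; rewrite NT -scaleN1r detZ.
  rewrite -signr_odd /= (negbTE ev) expr1 mulN1r => h.
  have : \det N *+ 2 == 0 by rewrite mulr2n -{1}h addNr.
  by rewrite Num.Theory.mulrn_eq0 /= => /eqP.
have NM : map_mx (intr : int -> 'F_2) N = M.
  apply/matrixP => i j; rewrite !mxE.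
  case: (ltngtP i j) => h.
  - by rewrite F2_natr.
  - by rewrite mulrNz F2_natr F2opp sy.
  - by rewrite (val_inj h) dg.
have : \det M == 0 by rewrite -NM det_map_mx dN rmorph0.
case/det0P => v v0 vM.
move/negP: v0; apply; apply/eqP; apply: nd => y.
by rewrite /bform vM mul0mx mxE.
Qed.

Lemma add_line_dim n (U : {vspace vT n}) v : v \notin U -> \dim (U + <[v]>)%VS = (\dim U).+1.
Proof.
move=> vU; apply/eqP; rewrite eqn_leq; apply/andP; split.
  have := dimv_sum_cap U <[v]>%VS; rewrite dim_vline.
  move=> h; have hb : (nat_of_bool (v != 0%R) <= 1)%N by case: (v != 0%R).
  lia.
apply: (@dim_strict _ _ _ v); first exact: addvSl.
  exact: (subvP (addvSr _ _) v (memv_line v)).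
exact: vU.
Qed.

Lemma cap_hyper_dim n (W H : {vspace vT n}) : \dim H = n -> (\dim W <= (\dim (W :&: H)).+1)%N.
Proof.
move=> dH; have := dimv_sum_cap W H; have := dimv_le (W + H)%VS; rewrite dH; lia.
Qed.

Lemma QD n (M : 'M['F_2]_(n.+1)) (a b : vT n) :
  bform M (a + b) (a + b) = bform M a a + bform M b b + bform M a b + bform M b a.
Proof.
rewrite bformDl !bformDr; ring.
Qed.

Lemma key_alg n (M : 'M['F_2]_(n.+1)) (W : {vspace vT n}) :
  (4 <= \dim W)%N ->
  (forall x, x \in W -> (forall y, y \in W -> bform M x y = 0) -> x = 0) ->
  (forall p, p \in W -> bform M p p = 1 -> exists H1 H2 : {vspace vT n},
     [/\ \dim H1 = n, \dim H2 = n, (forall y, y \in H1 -> bform M p y = 0) &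
         (forall y, y \in H2 -> bform M y p = 0)]) ->
  (exists x, x \in W /\ bform M x x = 1) ->
  exists p q, [/\ p \in W, q \in W, bform M p p = 1, bform M q q = 1 & bform M p q = 0].
Proof.
move=> dW ndW hyp [p [pW Qp]]; apply: NNPP => hn.
have asm : forall a b, a \in W -> b \in W -> bform M a a = 1 -> bform M a b = 0 -> bform M b b = 0.
  move=> a b aW bW Qa ab; case: (F2cases (bform M b b)) => // Qb.
  by exfalso; apply: hn; exists a, b.
have [H1 [H2 [d1 d2 h1 h2]]] := hyp p pW Qp.
set K := (W :&: H1 :&: H2)%VS.
have KW : forall x, x \in K -> [/\ x \in W, bform M p x = 0 & bform M x p = 0].
  move=> x; rewrite !memv_cap => /andP[/andP[a b] c]; split => //; by [apply: h1 | apply: h2].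
have QK : forall x, x \in K -> bform M x x = 0.
  by move=> x /KW[a b c]; apply: (asm p).
have BK : forall x h, x \in K -> h \in K -> bform M x h = 0.
  move=> x h xK hK; case: (F2cases (bform M x h)) => // xh; exfalso.
  have [xW px xp] := KW x xK; have [hW ph hp] := KW h hK.
  have Qq : bform M (p + x) (p + x) = 1 by rewrite QD Qp QK // px xp !addr0.
  have By : bform M (p + x) (p + h) = 0.
    by rewrite bformDl !bformDr Qp ph xp xh addr0 add0r F2_11.
  have := asm _ _ (memvD pW xW) (memvD pW hW) Qq By.
  by rewrite QD Qp QK // ph hp !addr0 => /eqP; rewrite oner_eq0.
have dK : (2 <= \dim K)%N.
  have := cap_hyper_dim W d1; have := cap_hyper_dim (W :&: H1)%VS d2; rewrite -/K; lia.
have pK : p \notin K by apply/negP => /QK; rewrite Qp => /eqP; rewrite oner_eq0.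
have [x1 [x1K x10]] : exists x, x \in K /\ x \notin (0 : {vspace vT n})%VS.
  by apply: dim_lt_notin; rewrite dimv0; lia.
rewrite memv0 in x10.
have [x2 [x2K x2n]] : exists x, x \in K /\ x \notin <[x1]>%VS.
  by apply: dim_lt_notin; rewrite dim_vline x10; lia.
have x20 : x2 != 0 by apply: contra x2n => /eqP ->; rewrite mem0v.
have [x1W _ x1p] := KW x1 x1K; have [x2W _ x2p] := KW x2 x2K.
have [z [zW x1z]] : exists z, z \in W /\ bform M x1 z = 1.
  apply: NNPP => hz; move/negP: x10; apply; apply/eqP; apply: ndW => // y yW.
  case: (F2cases (bform M x1 y)) => // e; exfalso; apply: hz; by exists y.
set S := (K + <[p]>)%VS.
have BS : forall x s, x \in K -> s \in S -> bform M x s = 0.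
  move=> x s xK /memv_addP[k kK [w /vlineP[c ->] ->]].
  by have [_ _ xp] := KW x xK; rewrite bformDr bformZr BK // xp mulr0 addr0.
have zS : z \notin S by apply/negP => /(BS x1 z x1K); rewrite x1z => /eqP; rewrite oner_eq0.
have SW : (S + <[z]> <= W)%VS.
  apply/subvP => w /memv_addP[s /memv_addP[k kK [w' /vlineP[c ->] ->]] [w2 /vlineP[d ->] ->]].
  by rewrite !memvD ?memvZ //; case: (KW k kK).
have eW : (S + <[z]>)%VS = W.
  apply: subv_dim_eq => //; rewrite add_line_dim // /S add_line_dim //.
  have := cap_hyper_dim W d1; have := cap_hyper_dim (W :&: H1)%VS d2; rewrite -/K; lia.
have dec : forall w, w \in W -> exists s d, s \in S /\ w = s + d *: z.
  move=> w; rewrite -eW => /memv_addP[s sS [w2 /vlineP[d ->] ->]]; by exists s, d.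
have x2z : bform M x2 z = 1.
  case: (F2cases (bform M x2 z)) => // e; exfalso; move/negP: x20; apply; apply/eqP.
  apply: ndW => // y /dec[s [d [sS ->]]].
  by rewrite bformDr bformZr e BS // mulr0 addr0.
have e12 : x1 + x2 = 0.
  apply: ndW; first exact: memvD.
  move=> y /dec[s [d [sS ->]]].
  by rewrite bformDr bformZr !bformDl BS // BS // x1z x2z F2_11 mulr0 !addr0.
have : x2 = x1 by apply: (@addIr _ x2); rewrite vadd2 e12.
by move=> e; rewrite e memv_line in x2n.
Qed.


Definition Uperp0 n (M : 'M['F_2]_(n.+1)) (U : {vspace vT n}) : Prop :=
  forall z, z \in U -> perpP M U z -> z = 0.

Lemma perp_add n (M : 'M['F_2]_(n.+1)) U p q :
  perpP M U q -> bform M p q = 0 -> perpP M (U + <[p]>)%VS q.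
Proof.
move=> hq pq x /memv_addP[u uU [w /vlineP[c ->] ->]].
by rewrite bformDl bformZl hq // pq mulr0 addr0.
Qed.

Lemma perp_sub n (M : 'M['F_2]_(n.+1)) (U V : {vspace vT n}) q :
  (U <= V)%VS -> perpP M V q -> perpP M U q.
Proof. by move=> UV h x xU; apply: h; exact: (subvP UV). Qed.

Lemma ext_step n (M : 'M['F_2]_(n.+1)) U p :
  Uperp0 M U -> perpP M U p -> bform M p p = 1 ->
  \dim (U + <[p]>)%VS = (\dim U).+1 /\ Uperp0 M (U + <[p]>)%VS.
Proof.
move=> h0 hp Qp.
have pU : p \notin U.
  apply/negP => pU; have := h0 p pU hp => e; move: Qp; rewrite e bform0l.
  by move/eqP; rewrite eq_sym oner_eq0.
split; first exact: add_line_dim.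
move=> z /memv_addP[u uU [w /vlineP[c ->] ->]] hz.
have hu : perpP M U u.
  move=> x xU; have := hz x (subvP (addvSl _ _) x xU).
  by rewrite bformDr bformZr hp // mulr0 addr0.
have u0 := h0 u uU hu; rewrite u0 add0r.
have := hz p (subvP (addvSr _ _) p (memv_line p)).
rewrite u0 add0r bformZr Qp mulr1 => ->; by rewrite scale0r.
Qed.

Lemma perp_space n theta (U : {vspace vT n}) : (1 < n)%N -> duality theta -> (\dim U < n.+1)%N ->
  exists W : {vspace vT n}, (forall y, y \in W <-> perpP (MB theta) U y) /\
     \dim W = (n.+1 - \dim U)%N.
Proof.
move=> n1 Hd dU; have [d0|d0] := posnP (\dim U).
  have U0 : U = 0%VS by apply/eqP; rewrite -dimv_eq0 d0.
  exists fullv; split; last by rewrite dimvT d0.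
  move=> y; rewrite memvf; split=> // _ x; rewrite U0 memv0 => /eqP ->.
  exact: bform0l.
have vU : vertex U by rewrite /vertex d0.
exists (theta U); split; first by move=> y; apply: theta_perp.
exact: dual_dim.
Qed.

Lemma chain n theta : (1 < n)%N -> duality theta ->
  (exists x, bform (MB theta) x x = 1) ->
  forall k, (k <= n - 2)%N ->
  exists U : {vspace vT n}, [/\ \dim U = k, Uperp0 (MB theta) U &
     exists q, perpP (MB theta) U q /\ bform (MB theta) q q = 1].
Proof.
move=> n1 Hd [x0 Qx0]; have n0 : (0 < n)%N by apply: ltnW.
set B := MB theta.
elim=> [_|k IH hk].
  exists 0%VS; split; first exact: dimv0.
    by move=> z; rewrite memv0 => /eqP.
  by exists x0; split => // x; rewrite memv0 => /eqP ->; exact: bform0l.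
have [U [dU h0 [q [hq Qq]]]] := IH (ltnW hk).
have dUlt : (\dim U < n.+1)%N by rewrite dU; lia.
have [W [WP dW]] := perp_space n1 Hd dUlt.
have ndW : forall x, x \in W -> (forall y, y \in W -> bform B x y = 0) -> x = 0.
  move=> x xW hx; have [xU|xU] := boolP (x \in U); first by apply: h0 => //; apply/WP.
  exfalso.
  have dU' := add_line_dim xU.
  have vU' : vertex (U + <[x]>)%VS by rewrite /vertex dU' dU; apply/andP; split; lia.
  have sub : (W <= theta (U + <[x]>))%VS.
    apply/subvP => y yW; apply/(theta_perp _ n1 Hd vU').
    by apply: perp_add; [apply/WP | rewrite hx].
  have := dimvS sub; rewrite (dual_dim Hd vU') dU' dW dU; lia.
have hyp : forall p, p \in W -> bform B p p = 1 -> exists H1 H2 : {vspace vT n},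
     [/\ \dim H1 = n, \dim H2 = n, (forall y, y \in H1 -> bform B p y = 0) &
         (forall y, y \in H2 -> bform B y p = 0)].
  move=> p pW Qp.
  have p0 : p != 0.
    by apply/negP => /eqP e; move: Qp; rewrite e bform0l => /eqP; rewrite eq_sym oner_eq0.
  have vp := point_vertex n0 p0.
  have [X [vX Xp]] := dual_surj Hd vp.
  exists (theta <[p]>%VS), X; split.
  - exact: hyp_dim.
  - have := dual_dim Hd vX; rewrite Xp dim_vline p0.
    move: vX; rewrite /vertex => /andP[a b] /= e; lia.
  - move=> y yH; have := theta_perp1 n1 Hd vp yH; apply; exact: memv_line.
  - move=> y yX; have : p \in theta X by rewrite Xp memv_line.
    by move/(theta_perp1 n1 Hd vX); apply.
have dW4 : (4 <= \dim W)%N by rewrite dW dU; lia.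
have [p [q' [pW q'W Qp Qq' pq']]] := key_alg dW4 ndW hyp
  (ex_intro _ q (conj (proj2 (WP q) hq) Qq)).
have [dU' h0'] := ext_step h0 (proj1 (WP p) pW) Qp.
exists (U + <[p]>)%VS; split => //; first by rewrite dU' dU.
by exists q'; split => //; apply: perp_add => //; apply/WP.
Qed.


Definition disj n (A B : {vspace vT n}) : Prop := forall z, z \in A -> z \in B -> z = 0.

Lemma disjE n (A B : {vspace vT n}) : disj A B <-> (A :&: B)%VS = 0%VS.
Proof.
split.
  move=> h; apply/eqP; rewrite -subv0; apply/subvP => z; rewrite memv_cap => /andP[a b].
  by rewrite (h z a b) mem0v.
move=> e z a b; apply/eqP; have : z \in (A :&: B)%VS by rewrite memv_cap a b.
by rewrite e memv0.
Qed.

Lemma chamber_fun n (C : {vspace vT n} -> Prop) : chamber C ->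
  exists c : nat -> {vspace vT n},
   [/\ (forall j, (0 < j < n.+1)%N -> C (c j)),
       (forall j, (j <= n.+1)%N -> \dim (c j) = j),
       (forall X, C X -> X = c (\dim X)),
       (forall j k, (j <= k <= n.+1)%N -> (c j <= c k)%VS) &
       (c 0%N = 0%VS /\ c n.+1 = fullv)].
Proof.
case=> [[vC iC] tC].
have H : forall j, exists X : {vspace vT n},
    ((0 < j < n.+1)%N -> C X /\ \dim X = j) /\ (j = 0%N -> X = 0%VS) /\ (j = n.+1 -> X = fullv).
  move=> j; case: (boolP (0 < j < n.+1)%N) => hj.
    have [X [CX dX]] := tC j hj; exists X; split => //.
    by split => e; move: hj; rewrite e //= ?ltnn ?andbF.
  have [j0|j0] := eqVneq j 0%N.
    by exists 0%VS; split => //; split => // e; move: j0; rewrite e.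
  by exists fullv; split => //; split => // h; rewrite h in j0.
pose c j := proj1_sig (constructive_indefinite_description _ (H j)).
have cS : forall j, ((0 < j < n.+1)%N -> C (c j) /\ \dim (c j) = j) /\ (j = 0%N -> c j = 0%VS) /\ (j = n.+1 -> c j = fullv).
  move=> j; exact: (proj2_sig (constructive_indefinite_description _ (H j))).
have dc : forall j, (j <= n.+1)%N -> \dim (c j) = j.
  move=> j jm; have [j0|jpos] := posnP j.
    by have [_ [h _]] := cS j; rewrite h // dimv0 j0.
  have [e|jlt] := eqVneq j n.+1.
    by have [_ [_ h]] := cS j; rewrite h // dimvT e.
  have [h _] := cS j; apply: (proj2 (h _)); rewrite jpos /= ltn_neqAle jlt jm.
  done.
have Cc : forall X, C X -> X = c (\dim X).
  move=> X CX; have vX := vC X CX; move: (vX); rewrite /vertex => hX.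
  have [h _] := cS (\dim X); have [Cc' dcX] := h hX.
  apply: subv_dim_eq; last by rewrite dcX.
  apply: (inc_le (iC _ _ CX Cc')); by rewrite dcX.
exists c; split.
- by move=> j hj; have [h _] := cS j; exact: (proj1 (h hj)).
- exact: dc.
- exact: Cc.
- move=> j k /andP[jk km].
  have [j0|jpos] := posnP j; first by have [_ [h _]] := cS j; rewrite h // sub0v.
  have [e|klt] := eqVneq k n.+1; first by have [_ [_ h]] := cS k; rewrite h // subvf.
  have hj : (0 < j < n.+1)%N by rewrite jpos /=; apply: (leq_ltn_trans jk); rewrite ltn_neqAle klt km.
  have hk : (0 < k < n.+1)%N by rewrite (leq_trans jpos jk) /= ltn_neqAle klt km.
  have [h1 _] := cS j; have [h2 _] := cS k.
  apply: inc_le; first by apply: iC; [exact: (proj1 (h1 hj)) | exact: (proj1 (h2 hk))].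
  by rewrite (proj2 (h1 hj)) (proj2 (h2 hk)).
- by split; [have [_ [h _]] := cS 0%N | have [_ [_ h]] := cS n.+1]; apply: h.
Qed.

Lemma disj_sym n (A B : {vspace vT n}) : disj A B -> disj B A.
Proof. by move=> h z a b; apply: h. Qed.

Lemma opp_flag n (c : nat -> {vspace vT n}) (W : {vspace vT n}) i :
  (forall j, (j <= n.+1)%N -> \dim (c j) = j) ->
  (forall j k, (j <= k <= n.+1)%N -> (c j <= c k)%VS) ->
  (i <= n.+1)%N -> \dim W = (n.+1 - i)%N -> disj (c i) W ->
  forall j, (j <= n.+1)%N -> exists d : nat -> {vspace vT n},
    (forall l, (l <= j)%N -> [/\ \dim (d l) = l, disj (d l) (c (n.+1 - l)%N) &
                                ((l <= n.+1 - i)%N -> (d l <= W)%VS)]) /\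
    (forall l, (l < j)%N -> (d l <= d l.+1)%VS).
Proof.
move=> dc mc im dW dis.
have WcF : (W + c i)%VS = fullv.
  apply: full_dim; have := dimv_sum_cap W (c i).
  have -> : (W :&: c i)%VS = 0%VS by apply/disjE; apply: disj_sym.
  rewrite dimv0 dW dc //; lia.
have dWc : forall l, (i <= l <= n.+1)%N -> \dim (W :&: c l)%VS = (l - i)%N.
  move=> l /andP[il lm]; have := dimv_sum_cap W (c l).
  have -> : (W + c l)%VS = fullv.
    apply/eqP; rewrite eqEsubv subvf /= -WcF; apply: addvS; first exact: subvv.
    by apply: mc; rewrite il lm.
  rewrite dimvT dW dc //; lia.
elim=> [_|j IH hj].
  exists (fun _ => 0%VS); split=> [l|l] //; rewrite leqn0 => /eqP ->.
  by split; [exact: dimv0 | move=> z; rewrite memv0 => /eqP | move=> _; exact: sub0v].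
have [d [dP dM]] := IH (ltnW hj).
have [dj disj_j subj] := dP j (leqnn j).
have cmono : (c (n.+1 - j.+1)%N <= c (n.+1 - j)%N)%VS by apply: mc; apply/andP; split; lia.
have [w [w1 [w2 w3]]] : exists w, [/\ w \in c (n.+1 - j)%N, w \notin c (n.+1 - j.+1)%N &
                                        ((j < n.+1 - i)%N -> w \in W)].
  have [ji|ji] := ltnP j (n.+1 - i).
    have hlt : (\dim (W :&: c (n.+1 - j.+1)%N)%VS < \dim (W :&: c (n.+1 - j)%N)%VS)%N.
      by rewrite !dWc; [lia | apply/andP; split; lia | apply/andP; split; lia].
    have [w [wU wV]] := dim_lt_notin hlt.
    move: wU; rewrite memv_cap => /andP[wW wc].
    exists w; split => //; apply/negP => h; move/negP: wV; apply; by rewrite memv_cap wW h.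
  have hlt : (\dim (c (n.+1 - j.+1)%N) < \dim (c (n.+1 - j)%N))%N.
    by rewrite !dc; lia.
  have [w [wU wV]] := dim_lt_notin hlt.
  by exists w; split => // h; lia.
have wd : w \notin d j.
  apply/negP => h; have := disj_j w h w1 => e; by rewrite e mem0v in w2.
pose d' := fun l : nat => if (l == j.+1)%N then (d j + <[w]>)%VS else d l.
exists d'; split; last first.
  move=> l; rewrite ltnS leq_eqVlt => /orP[/eqP ->|lj].
    by rewrite /d' eqxx (ltn_eqF (ltnSn j)); exact: addvSl.
  have e1 : (l == j.+1) = false by apply: ltn_eqF; lia.
  have e2 : (l.+1 == j.+1) = false by apply: ltn_eqF; lia.
  by rewrite /d' e1 e2; apply: dM.
move=> l; rewrite leq_eqVlt => /orP[/eqP ->|lj]; last first.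
  have e1 : (l == j.+1) = false by apply: ltn_eqF; lia.
  by rewrite /d' e1; apply: dP; lia.
rewrite /d' eqxx; split.
- by rewrite add_line_dim // dj.
- move=> z /memv_addP[a ad [w' /vlineP[t ->] ->]] zc.
  have ac : a \in c (n.+1 - j)%N.
    have -> : a = (a + t *: w) + t *: w by rewrite -addrA vadd2 addr0.
    by rewrite memvD ?memvZ // (subvP cmono).
  have a0 := disj_j a ad ac; rewrite a0 add0r.
  case: (F2cases t) => te; first by rewrite te scale0r.
  by move: zc; rewrite a0 add0r te scale1r => h; rewrite h in w2.
- move=> hl; rewrite subv_add subj; last lia.
  by rewrite -memvE w3 //; lia.
Qed.

Lemma ext_opp n (U W : {vspace vT n}) (C : {vspace vT n} -> Prop) :
  vertex U -> (\dim U + \dim W = n.+1)%N -> disj U W -> chamber C -> C U ->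
  exists D, [/\ chamber D, D W & chamber_opp C D].
Proof.
move=> vU dUW dis HC CU.
have [c [Cc dc Cd cm [c0 cm1]]] := chamber_fun HC.
set i := \dim U.
have Ui : U = c i by apply: Cd.
have dW : \dim W = (n.+1 - i)%N by rewrite /i; lia.
have im : (i <= n.+1)%N by move: vU; rewrite /vertex /i => /andP[_ h]; apply: ltnW.
have disi : disj (c i) W by rewrite -Ui.
have [d [dP dM]] := opp_flag dc cm im dW disi (leqnn n.+1).
have mono : forall l k, (l <= k <= n.+1)%N -> (d l <= d k)%VS.
  move=> l; elim=> [|k IH]; first by rewrite leqn0 => /andP[/eqP -> _]; exact: subvv.
  case/andP; rewrite leq_eqVlt => /orP[/eqP -> _|lk km]; first exact: subvv.
  apply: (subv_trans (IH _)); first by rewrite -ltnS lk /=; apply: ltnW.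
  by apply: dM.
have dd : forall l, (l <= n.+1)%N -> \dim (d l) = l.
  by move=> l lm; have [h _ _] := dP l lm.
have dWe : d (n.+1 - i)%N = W.
  have [h1 _ h3] := dP (n.+1 - i)%N (leq_subr _ _).
  by apply: subv_dim_eq; [apply: h3 | rewrite h1 dW].
move: vU; rewrite /vertex -/i => /andP[i0 iM].
exists (fun X => exists l, (0 < l < n.+1)%N /\ X = d l); split.
- split.
    split.
      by move=> X [l [hl ->]]; rewrite /vertex dd //; apply: ltnW; case/andP: hl.
    move=> X Y [l [hl ->]] [k [hk ->]].
    have lm : (l <= n.+1)%N by case/andP: hl => _ h; apply: ltnW.
    have km : (k <= n.+1)%N by case/andP: hk => _ h; apply: ltnW.
    case: (leqP l k) => lk; [left; apply: mono; rewrite lk | right; apply: mono; rewrite (ltnW lk)] => //.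
  move=> j hj; exists (d j); split; last by apply: dd; case/andP: hj => _ h; lia.
  by exists j; split => //; case/andP: hj => a b; rewrite a /=; lia.
- by exists (n.+1 - i)%N; split => //; apply/andP; split; lia.
- split => //; split.
    split.
      split.
        by move=> X [l [hl ->]]; rewrite /vertex dd //; apply: ltnW; case/andP: hl.
      move=> X Y [l [hl ->]] [k [hk ->]].
      have lm : (l <= n.+1)%N by case/andP: hl => _ h; apply: ltnW.
      have km : (k <= n.+1)%N by case/andP: hk => _ h; apply: ltnW.
      case: (leqP l k) => lk; [left; apply: mono; rewrite lk | right; apply: mono; rewrite (ltnW lk)] => //.
    move=> j hj; exists (d j); split; last by apply: dd; case/andP: hj => _ h; lia.
    by exists j; split => //; case/andP: hj => a b; rewrite a /=; lia.
  move=> X Y CX [l [hl ->]] hs.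
  have lm : (l <= n.+1)%N by case/andP: hl => _ h; apply: ltnW.
  rewrite dd // in hs.
  have -> : X = c (n.+1 - l)%N by rewrite (Cd X CX); congr c; lia.
  rewrite capvC; apply/disjE; by have [_ h _] := dP l lm.
Qed.

Lemma chamber_opp_sym n (C D : {vspace vT n} -> Prop) : chamber_opp C D -> chamber_opp D C.
Proof.
case=> hC [hD h]; split => //; split => // X Y DX CY s.
by rewrite capvC; apply: h => //; rewrite addnC.
Qed.

Lemma opp_vertex n (U W : {vspace vT n}) :
  vertex U -> (\dim U + \dim W = n.+1)%N -> disj U W ->
  simplex_opp (fun X => X = U) (fun X => X = W).
Proof.
move=> vU dUW dis.
have vW : vertex W.
  move: vU; rewrite /vertex => /andP[a b]; apply/andP; split; lia.
have sing : forall V : {vspace vT n}, vertex V -> simplex (fun X => X = V).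
  by move=> V vV; split => [X -> //|X Y -> ->]; left; exact: subvv.
split; first exact: sing.
split; first exact: sing.
split.
  move=> C HC F; have [D [HD DW opp]] := ext_opp vU dUW dis HC (F U erefl).
  exists D; split => //; split => //; by move=> X ->.
move=> D HD F.
have dWU : (\dim W + \dim U = n.+1)%N by rewrite addnC.
have [C [HC CU opp]] := ext_opp vW dWU (disj_sym dis) HD (F W erefl).
exists C; split => //; split; [by move=> X -> | exact: chamber_opp_sym].
Qed.

Lemma nd_MB n theta (x : vT n) : (1 < n)%N -> duality theta ->
  (forall y, bform (MB theta) x y = 0) -> x = 0.
Proof.
move=> n1 Hd h; have n0 : (0 < n)%N by apply: ltnW.
apply: NNPP => /eqP x0.
have hl : (\dim (theta <[x]>%VS) < \dim (fullv : {vspace vT n}))%N by rewrite hyp_dim // dimvT.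
have [y [_ yn]] := dim_lt_notin hl.
move: (h y); rewrite bform_MB // => /eqP; rewrite fB_memE // => yin.
by rewrite yin in yn.
Qed.

Lemma img_single n theta (U : {vspace vT n}) :
  img theta (fun X => X = U) = (fun W => W = theta U).
Proof.
apply: functional_extensionality => W; apply: propositional_extensionality.
split; first by case=> X [-> ->].
by move=> ->; exists U.
Qed.

Lemma opp_single n theta (U : {vspace vT n}) : duality theta -> vertex U ->
  disj U (theta U) -> exists F, [/\ simplex F, has_type F (\dim U) & simplex_opp F (img theta F)].
Proof.
move=> Hd vU dis; exists (fun X => X = U); rewrite img_single.
have so := opp_vertex vU (_ : (\dim U + \dim (theta U) = n.+1)%N) dis.
split.
- by split => [X -> //|X Y -> ->]; left; exact: subvv.
- by exists U.
- apply: so; rewrite (dual_dim Hd vU); move: vU; rewrite /vertex => /andP[a b]; lia.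
Qed.

Theorem theorem3p10 (n : nat) (theta : {vspace vT n} -> {vspace vT n}) :
  (2 <= n)%N -> duality theta -> domestic theta ->
  exceptional_domestic theta \/ (odd n /\ symplectic_polarity theta).
Proof.
move=> n1 Hd Hdom; have n0 : (0 < n)%N by apply: ltnW.
case: (classic (forall x, bform (MB theta) x x = 0)) => alt.
  right; have nd := fun x => @nd_MB n theta x n1 Hd.
  split; first exact: alt_odd alt nd.
  exists (MB theta); split => //; split => // U vU y; exact: theta_perp.
left; split => // i hi.
have [x Qx] : exists x, bform (MB theta) x x = 1.
  apply: NNPP => h; apply: alt => x; case: (F2cases (bform (MB theta) x x)) => // e.
  by exfalso; apply: h; exists x.
have x0 : x != 0 by apply/negP => /eqP e; move: Qx; rewrite e bform0l => /eqP; rewrite eq_sym oner_eq0.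
have [i_n|i_lt] := eqVneq i n.
  have vx := point_vertex n0 x0.
  have [X [vX Xx]] := dual_surj Hd vx.
  have dX : \dim X = n.
    have := dual_dim Hd vX; rewrite Xx dim_vline x0; move: vX; rewrite /vertex => /andP[a b] /= e; lia.
  have [F [sF tF oF]] : exists F, [/\ simplex F, has_type F (\dim X) & simplex_opp F (img theta F)].
    apply: opp_single => //; rewrite Xx => z zX /vlineP[c zc].
    case: (F2cases c) => ce; first by rewrite zc ce scale0r.
    exfalso; have xX : x \in X by rewrite -(scale1r x) -ce -zc.
    have xT : x \in theta X by rewrite Xx memv_line.
    have := theta_perp1 n1 Hd vX xT xX; rewrite Qx => /eqP; by rewrite oner_eq0.
  have iX : i = \dim X by rewrite dX.
  by exists F; split => //; rewrite iX.
have hk : (i.-1 <= n - 2)%N by move: hi i_lt; lia.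
have [U [dU h0 [q [hq Qq]]]] := chain n1 Hd (ex_intro _ x Qx) hk.
have [dU' h0'] := ext_step h0 hq Qq.
have vU' : vertex (U + <[q]>)%VS by rewrite /vertex dU' dU; move: hi i_lt; lia.
have [F [sF tF oF]] : exists F, [/\ simplex F, has_type F (\dim (U + <[q]>)%VS) & simplex_opp F (img theta F)].
  apply: opp_single => // z zU zT; apply: h0' => //.
  exact: (theta_perp1 n1 Hd vU' zT).
by exists F; split => //; move: tF; rewrite dU' dU; have -> : i.-1.+1 = i by lia.
Qed.
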